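(* Let $(p,f)$ be an SCF-RT that is rationalizable within the class of Fechnerian RUM-CFs. Let $(x,y)\in C\setminus D$ and suppose there exists $z\in X$ with $(x,z),(y,z)\in D$. Then there is a number $\bar p(x,y)$ such that every Fechnerian RUM-CF rationalizing $(p,f)$ satisfies $G(y,x)(0)=\bar p(x,y)$. Moreover, if $p(x,z)\geq p(y,z)$, then $\bar p(x,y)=p(x,z)\,F(x,z)(\theta(y,z))$ if $p(y,z)>1/2$; $\bar p(x,y)=p(x,z)$ if $p(y,z)=1/2$; and $\bar p(x,y)=1-p(z,x)\,F(z,x)(\theta(z,y))$ if $p(y,z)<1/2$.
   Context: $X$ is a finite set of options; $C=\{(x,y): x,y\in X,\ x\neq y\}$; $D\subseteq C$ is a fixed non-empty set with $(x,y)\in D\Rightarrow (y,x)\in D$. An SCF $p$ assigns to each $(x,y)\in D$ a number $p(x,y)>0$ with $p(x,y)+p(y,x)=1$. An SCF-RT is a pair $(p,f)$ where $p$ is an SCF and $f$ assigns to each $(x,y)\in D$ a strictly positive density $f(x,y)$ on $\mathbb{R}^+$ with cdf $F(x,y)$. A RUM is a pair $(u,g)$ with $u:X\to\mathbb{R}$ and $g$ assigning to each $(x,y)\in C$ a density $g(x,y)$ on $\mathbb{R}$ (cdf $G(x,y)$) with $\int v\,g(x,y)(v)\,dv=u(x)-u(y)=:v(x,y)$, $g(x,y)(v)=g(y,x)(-v)$ for all $v$, and connected support. A RUM-CF is $(u,g,r)$ with $(u,g)$ a RUM and $r:\mathbb{R}^{++}\to\mathbb{R}^+$ continuous, strictly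 decreasing where $r(v)>0$, $\lim_{v\to0}r(v)=\infty$, $\lim_{v\to\infty}r(v)=0$; $r^{-1}(t)$ ($t>0$) is the inverse of $r$ restricted to $\{r>0\}$. It rationalizes $(p,f)$ if for all $(x,y)\in D$: $G(x,y)(0)=p(y,x)$ and $\frac{1-G(x,y)(r^{-1}(t))}{1-G(x,y)(0)}=F(x,y)(t)$ for all $t>0$. A RUM-CF is Fechnerian if there is a density $g$ on $\mathbb{R}$ with $g(\delta)=g(-\delta)>0$ for all $\delta\geq0$ such that $g(x,y)(v)=g(v-v(x,y))$ for all $(x,y)\in C$, $v\in\mathbb{R}$. For $(a,b)\in D$ with $p(a,b)>p(b,a)$, $\theta(a,b)>0$ is defined by $F(a,b)(\theta(a,b))=\frac{1}{2p(a,b)}$. *)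

(* Defs.v *)
From HB Require Import structures.
From mathcomp Require Import all_boot all_order all_algebra.
From mathcomp Require Import all_classical all_reals all_analysis.
Set Implicit Arguments. Unset Strict Implicit. Unset Printing Implicit Defensive.
Import Order.TTheory GRing.Theory Num.Theory.
Import numFieldNormedType.Exports.
Local Open Scope classical_set_scope.
Local Open Scope ring_scope.

Section Defs.
Variable R : realType.
Notation mu := (@lebesgue_measure R).

Definition densityR (g : R -> R) : Prop :=
  measurable_fun setT g /\ (forall v, 0 <= g v) /\
  (\int[mu]_v (g v)%:E = 1%:E)%E.

Definition cdfR (g : R -> R) (v : R) : R :=
  fine (\int[mu]_(w in [set w : R | (w <= v)%R]) (g w)%:E)%E.

Definition pos_densityRp (f : R -> R) : Prop :=
  measurable_fun [set t : R | 0 <= t] f /\ (forall t, 0 <= t -> 0 < f t) /\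
  (\int[mu]_(t in [set t : R | (0 <= t)%R]) (f t)%:E = 1%:E)%E.

Definition cdfRp (f : R -> R) (t : R) : R :=
  fine (\int[mu]_(s in [set s : R | (0 <= s <= t)%R]) (f s)%:E)%E.

Variable X : finType.

Definition is_SCF (D : rel X) (p : X -> X -> R) : Prop :=
  forall x y, D x y -> 0 < p x y /\ p x y + p y x = 1.

Definition is_SCF_RT (D : rel X) (p : X -> X -> R) (f : X -> X -> R -> R) : Prop :=
  is_SCF D p /\ forall x y, D x y -> pos_densityRp (f x y).

Definition is_RUM (u : X -> R) (g : X -> X -> R -> R) : Prop :=
  forall x y, x != y ->
    densityR (g x y) /\
    mu.-integrable setT (fun v => (v * g x y v)%:E) /\
    (\int[mu]_v (v * g x y v)%:E = (u x - u y)%:E)%E /\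
    (forall v, g x y v = g y x (- v)) /\
    connected (closure [set v | 0 < g x y v]).

Definition is_CF (r : R -> R) : Prop :=
  (forall v, 0 < v -> 0 <= r v) /\
  {within `]0, +oo[, continuous r} /\
  (forall a b, 0 < a -> a < b -> 0 < r a -> 0 < r b -> r b < r a) /\
  (r v @[v --> 0^'+] --> +oo) /\
  (r v @[v --> +oo] --> 0).

Definition rinv (r : R -> R) (t : R) : R :=
  xget 0 [set v | 0 < v /\ 0 < r v /\ r v = t].

Definition is_RUM_CF (u : X -> R) (g : X -> X -> R -> R) (r : R -> R) : Prop :=
  is_RUM u g /\ is_CF r.

Definition rationalizes (D : rel X) (p : X -> X -> R) (f : X -> X -> R -> R)
    (u : X -> R) (g : X -> X -> R -> R) (r : R -> R) : Prop :=
  forall x y, D x y ->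
    cdfR (g x y) 0 = p y x /\
    forall t, 0 < t ->
      (1 - cdfR (g x y) (rinv r t)) / (1 - cdfR (g x y) 0) = cdfRp (f x y) t.

Definition fechnerian (u : X -> R) (g : X -> X -> R -> R) : Prop :=
  exists g0 : R -> R, densityR g0 /\
    (forall d, 0 <= d -> g0 d = g0 (- d) /\ 0 < g0 d) /\
    forall x y, x != y -> forall v, g x y v = g0 (v - (u x - u y)).

Definition theta (p : X -> X -> R) (f : X -> X -> R -> R) (a b : X) : R :=
  xget 0 [set t | 0 < t /\ cdfRp (f a b) t = 1 / (2 * p a b)].

End Defs.

(* Main.v *)
Require Import Defs.
From HB Require Import structures.
From mathcomp Require Import all_boot all_order all_algebra.
From mathcomp Require Import all_classical all_reals all_analysis.
From mathcomp Require Import measurable_realfun.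
From mathcomp Require Import lra ring.
Import Order.TTheory GRing.Theory Num.Theory.
Section S.
Context {R : realType}.
Import numFieldNormedType.Exports.
Local Open Scope classical_set_scope.
Local Open Scope ring_scope.
Notation mu := (@lebesgue_measure R).

Definition shiftf (c : R) : measurableTypeR R -> measurableTypeR R := fun x => x - c.
Lemma shiftf_meas c D : measurable_fun D (shiftf c).
Proof. rewrite /shiftf. apply: measurable_funB => //; exact: measurable_cst. Qed.
Hint Extern 0 (measurable_fun _ (shiftf _)) => solve [apply: shiftf_meas] : core.

Lemma lebesgue_measure_shift (c : R) (A : set R) : measurable A ->
  pushforward mu (shiftf c) A = mu A.
Proof.
move=> mA. 
apply/esym. apply: (@lebesgue_measure_unique R (pushforward mu (shiftf c))) => //.
move=> _ [[a b]] _ <-.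
rewrite /=; change (mu `]a, b]%classic = mu (shiftf c @^-1` `]a, b]%classic)).
rewrite (_ : shiftf c @^-1` _ = `](a + c), (b + c)]%classic); last first.
  apply/seteqP; split => x /=; rewrite !in_itv /= /shiftf.
    by rewrite ltrBrDr lerBlDr.
  by rewrite ltrBrDr lerBlDr.
rewrite !lebesgue_measure_itv /= !lte_fin ltrD2r.
by case: ifP => // _; rewrite -!EFinD opprD addrACA subrr addr0.
Qed.


Lemma int_shift (g : R -> R) (c s : R) : measurable_fun setT g -> (forall v, (0 <= g v)%R) ->
  (\int[mu]_(w in [set w : R | (w <= s)%R]) (g (w - c))%:E = \int[mu]_(w in [set w : R | (w <= s - c)%R]) (g w)%:E)%E.
Proof.
move=> mg g0.
have mD : measurable [set w : R | (w <= s - c)%R].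
  rewrite (_ : [set w : R | (w <= s - c)%R] = `]-oo, (s - c)]%classic); first exact: measurable_itv.
  by apply/seteqP; split => x /=; rewrite in_itv.
rewrite [RHS](eq_measure_integral (pushforward mu (shiftf c))); last first.
  by move=> A mA _; apply/esym; apply: lebesgue_measure_shift.
rewrite ge0_integral_pushforward //; last 2 first.
- apply/measurable_EFinP; exact: measurable_funS mg.
- by move=> y _; rewrite lee_fin.
rewrite (_ : shiftf c @^-1` _ = [set w : R | (w <= s)%R]) //.
apply/seteqP; split => x /=; rewrite /shiftf lerD2r //.
Qed.
End S.

Section S2.
Context {R : realType}.
Import numFieldNormedType.Exports.
Local Open Scope classical_set_scope.
Local Open Scope ring_scope.
Notation mu := (@lebesgue_measure R).

Lemma int_refl (g : R -> R) (s : R) : measurable_fun setT g -> (forall v, 0 <= g v) ->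
  (forall v, g (- v) = g v) ->
  (\int[mu]_(w in [set w : R | (w <= - s)%R]) (g w)%:E = \int[mu]_(w in [set w : R | (s <= w)%R]) (g w)%:E)%E.
Proof.
move=> mg g0 gs.
have mD : measurable [set w : R | w <= - s].
  rewrite (_ : [set w : R | w <= - s] = `]-oo, (- s)]%classic); first exact: measurable_itv.
  by apply/seteqP; split => x /=; rewrite in_itv.
rewrite [LHS](eq_measure_integral (pushforward mu (-%R : _ -> measurableTypeR R))); last first.
  by move=> A mA _; apply/esym; apply: lebesgue_measureN.
rewrite ge0_integral_pushforward //; last 2 first.
- apply/measurable_EFinP; exact: measurable_funS mg.
- by move=> y _; rewrite lee_fin.
rewrite (_ : -%R @^-1` _ = [set w : R | s <= w]); last first.
  by apply/seteqP; split => x /=; rewrite lerN2.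
by apply: eq_integral => x _ /=; rewrite gs.
Qed.


Lemma int_pos (g : R -> R) (a b : R) : measurable_fun setT g -> (forall v, 0 < g v) -> a < b ->
  (0 < \int[mu]_(w in `]a, b]) (g w)%:E)%E.
Proof.
move=> mg g0 ab.
have mD : measurable (`]a, b]%classic : set R) by exact: measurable_itv.
have mf : measurable_fun (`]a, b]%classic : set R) (fun w => (g w)%:E).
  apply/measurable_EFinP; exact: measurable_funS mg.
rewrite lt0e integral_ge0 ?andbT; last by move=> x _; rewrite lee_fin ltW.
apply/eqP => H0.
have := (ae_eq_integral_abs mu mD mf).1.
case.
  rewrite -H0; apply: eq_integral => x _; rewrite gee0_abs // lee_fin ltW //.
move=> N [mN N0 sub].
have : (mu (`]a, b]%classic) <= mu N)%E.
  apply: le_measure; rewrite ?inE //.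
  move=> x xab; apply: sub => /=; move=> /(_ xab) /= [] /eqP; rewrite gt_eqF //.
rewrite N0 lebesgue_measure_itv /= lte_fin ab -EFinD lee_fin subr_le0 leNgt ab //.
Qed.


Lemma setLE (s : R) : [set w : R | w <= s] = `]-oo, s]%classic.
Proof. by apply/seteqP; split => x /=; rewrite in_itv. Qed.
Lemma setGT (s : R) : [set w : R | s < w] = `]s, +oo[%classic.
Proof. by apply/seteqP; split => x /=; rewrite in_itv /= andbT. Qed.
Lemma setGE (s : R) : [set w : R | s <= w] = `[s, +oo[%classic.
Proof. by apply/seteqP; split => x /=; rewrite in_itv /= andbT. Qed.

Section cdf.
Variable g : R -> R.
Hypothesis dg : densityR g.
Hypothesis gsym : forall v, g (- v) = g v.
Hypothesis gpos : forall v, 0 < g v.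

Let mg : measurable_fun setT g. Proof. by case: dg. Qed.
Let g0 v : 0 <= g v. Proof. exact: ltW. Qed.

Lemma Ifin s : (\int[mu]_(w in [set w : R | (w <= s)%R]) (g w)%:E)%E \is a fin_num.
Proof.
rewrite ge0_fin_numE; last by apply: integral_ge0 => x _; rewrite lee_fin.
apply: (@le_lt_trans _ _ 1%E); last exact: ltry.
case: dg => _ [_ <-].
apply: ge0_subset_integral => //.
- by rewrite setLE; exact: measurable_itv.
- by apply/measurable_EFinP.
- by move=> x _; rewrite lee_fin.
Qed.

Lemma cdfE s : (\int[mu]_(w in [set w : R | (w <= s)%R]) (g w)%:E)%E = (cdfR g s)%:E.
Proof. by rewrite /cdfR fineK // Ifin. Qed.

Lemma cdf_split s : (\int[mu]_(w in [set w : R | (w <= s)%R]) (g w)%:E +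
   \int[mu]_(w in [set w : R | (s < w)%R]) (g w)%:E = 1)%E.
Proof.
rewrite -ge0_integral_setU //.
- rewrite (_ : _ `|` _ = setT); first by case: dg => _ [_ ->].
  by apply/seteqP; split => x //= _; case: (leP x s); [left|right].
- by rewrite setLE; exact: measurable_itv.
- by rewrite setGT; exact: measurable_itv.
- by apply/measurable_EFinP; exact: measurable_funS mg.
- by move=> x _; rewrite lee_fin.
- by apply/disj_setPS => x /= [] /le_lt_trans H /H; rewrite ltxx.
Qed.

Lemma cdfN s : cdfR g (- s) = 1 - cdfR g s.
Proof.
move: (cdf_split s); rewrite cdfE => H.
rewrite /cdfR int_refl //.
rewrite setGE -integral_itv_obnd_cbnd; last by apply/measurable_EFinP; exact: measurable_funS mg.
rewrite -setGT.
have -> : (\int[mu]_(w in [set w : R | (s < w)%R]) (g w)%:E)%E = (1 - cdfR g s)%:E.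
  by rewrite EFinB -H addeAC subee ?add0e.
by [].
Qed.

Lemma cdf_lt a b : a < b -> cdfR g a < cdfR g b.
Proof.
move=> ab.
have := @int_pos g a b mg gpos ab.
have Hs : [set w : R | (w <= b)%R] = [set w : R | (w <= a)%R] `|` `]a, b]%classic.
  apply/seteqP; split => x /=; rewrite in_itv /=.
    by move=> xb; case: (leP x a) => xa; [left|right; rewrite xb].
  by case=> [xa|/andP[_ //]]; apply: le_trans xa (ltW ab).
have : (\int[mu]_(w in [set w : R | (w <= b)%R]) (g w)%:E =
  \int[mu]_(w in [set w : R | (w <= a)%R]) (g w)%:E + \int[mu]_(w in `]a, b]) (g w)%:E)%E.
  rewrite Hs ge0_integral_setU //.
  - by rewrite setLE; exact: measurable_itv.
  - by apply/measurable_EFinP; exact: measurable_funS mg.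
  - by move=> x _; rewrite lee_fin.
  - by apply/disj_setPS => x /= []; rewrite in_itv /= => xa /andP[ax _]; move: (le_lt_trans xa ax); rewrite ltxx.
rewrite !cdfE => H P.
have Pfin : (\int[mu]_(w in `]a, b]) (g w)%:E)%E \is a fin_num.
  by move: (Ifin b); rewrite cdfE H fin_numD => /andP[].
move: P H; rewrite -(fineK Pfin) -EFinD => P [->].
by rewrite ltrDl -lte_fin.
Qed.

End cdf.

Lemma cdfRp_small (f : R -> R) : pos_densityRp f ->
  forall e, 0 < e -> exists t, 0 < t /\ cdfRp f t < e.
Proof.
move=> [mf [fpos fint]] e e0.
have mD : measurable [set t : R | 0 <= t].
  by rewrite setGE; exact: measurable_itv.
have intf : mu.-integrable setT (EFin \o (f \_ [set t : R | 0 <= t])).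
  rewrite -restrict_EFin; apply/integrable_restrict => //=; rewrite setTI.
  apply/integrableP; split; first exact/measurable_EFinP.
  rewrite (_ : (\int[mu]_(x in [set t : R | (0 <= t)%R]) `|(EFin \o f) x|)%E = 1%E).
    exact: ltry.
  rewrite -fint; apply: eq_integral => x; rewrite inE /= => x0.
  by rewrite /= ger0_norm // ltW // fpos.
have [d [d0 H]] := integral_normr_continuous intf e0.
exists (d / 2); split; first by rewrite divr_gt0.
have mA : measurable [set s : R | 0 <= s <= d / 2].
  rewrite (_ : [set s : R | 0 <= s <= d / 2] = `[0, d / 2]%classic); first exact: measurable_itv.
  by apply/seteqP; split => x /=; rewrite in_itv.
have := H _ mA.
rewrite (_ : [set s : R | 0 <= s <= d / 2] = `[0, d / 2]%classic); last first.
  by apply/seteqP; split => x /=; rewrite in_itv.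
have mlt : (mu `[0%R, (d/2)%R]%classic < d%:E)%E.
  rewrite lebesgue_measure_itv /= lte_fin divr_gt0 // -EFinD lte_fin.
  lra.
move=> /(_ mlt); apply: le_lt_trans; rewrite le_eqVlt; apply/orP; left; apply/eqP.
rewrite /cdfRp /Rintegral.
congr fine.
rewrite (_ : [set s : R | 0 <= s <= d / 2] = `[0, d / 2]%classic); last first.
  by apply/seteqP; split => x /=; rewrite in_itv.
apply: eq_integral => x; rewrite inE /= in_itv /= => /andP[x0 _].
by rewrite patchE mem_set //= ger0_norm // ltW // fpos.
Qed.

End S2.

Section S3.
Context {R : realType}.
Import numFieldNormedType.Exports.
Local Open Scope classical_set_scope.
Local Open Scope ring_scope.

Lemma rinv_eq (r : R -> R) : is_CF r -> forall v, 0 < v -> 0 < r v -> rinv r (r v) = v.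
Proof.
move=> [_ [_ [rdec _]]] v v0 rv0.
rewrite /rinv; apply: xget_unique; first by split.
move=> y [y0 [ry0 ryv]].
case: (ltgtP y v) => // yv.
- by have := rdec _ _ y0 yv ry0 rv0; rewrite ryv ltxx.
- by have := rdec _ _ v0 yv rv0 ry0; rewrite ryv ltxx.
Qed.

Lemma rinv_cases (r : R -> R) t : rinv r t = 0 \/ (0 < rinv r t /\ 0 < r (rinv r t) /\ r (rinv r t) = t).
Proof. by rewrite /rinv; case: xgetP => [x _ H|_]; [right|left]. Qed.

Lemma r_bound (r : R -> R) : is_CF r -> forall v1, 0 < v1 -> r v1 = 0 ->
  forall v, 0 < v -> 0 < r v -> v < v1.
Proof.
move=> [rge0 [rcont [rdec [rlim0 _]]]] v1 v10 rv1 v v0 rv0.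
rewrite ltNge; apply/negP => v1v.
have v1v' : v1 < v.
  rewrite lt_neqAle v1v andbT; apply/negP => /eqP E.
  by move: rv0; rewrite -E rv1 ltxx.
have rl := rlim0; move/cvgryPge: rl => rl.
have h1 := rl (r v + 1).
have h2 := @nbhs_right_gt R 0.
have h3 := @nbhs_right_lt R 0 v1 v10.
have : nbhs 0^'+ (fun x => r v + 1 <= r x /\ 0 < x /\ x < v1).
  by apply: (filterS3 _ _ h1 h2 h3) => x ? ? ?.
move=> /filter_ex [a [ra [a0 av1]]].

have cont : {within `[a, v1], continuous r}.
  apply: continuous_subspaceW rcont => x /=; rewrite !in_itv /= andbT => /andP[ax _].
  by apply: lt_le_trans ax.
have hv : Num.min (r a) (r v1) <= r v <= Num.max (r a) (r v1).
  rewrite rv1 ge_min le_max (ltW rv0) orbT /=.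
  have : r v <= r v + 1 by lra.
  by move=> h; rewrite (le_trans h ra).
have [c] := IVT (ltW av1) cont hv.
rewrite in_itv /= => /andP[ac cv1] rc.
have c0 : 0 < c by apply: lt_le_trans ac.
have cv : c < v by apply: le_lt_trans v1v'.
have rc0 : 0 < r c by rewrite rc.
have := rdec _ _ c0 cv rc0 rv0.
by rewrite rc ltxx.
Unshelve. all: by end_near.
Qed.

End S3.

Section Main.
Context {R : realType} {X : finType}.
Import numFieldNormedType.Exports.
Local Open Scope classical_set_scope.
Local Open Scope ring_scope.

Definition pbarF (p : X -> X -> R) (f : X -> X -> R -> R) (x y z : X) : R :=
  if 1 / 2 < p y z then p x z * cdfRp (f x z) (theta p f y z)
  else if p y z == 1 / 2 then p x z
  else 1 - p z x * cdfRp (f z x) (theta p f z y).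

Variables (D : rel X) (p : X -> X -> R) (f : X -> X -> R -> R).
Hypothesis HDC : forall x y, D x y -> x != y.
Hypothesis HDsym : forall x y, D x y -> D y x.
Hypothesis Hpf : is_SCF_RT D p f.
Variables (u : X -> R) (g : X -> X -> R -> R) (r : R -> R).
Hypothesis HRC : is_RUM_CF u g r.
Hypothesis Hfech : fechnerian u g.
Hypothesis Hrt : rationalizes D p f u g r.

Lemma core (x y z : X) : x != y -> D x z -> D y z ->
  cdfR (g y x) 0 = pbarF p f x y z.
Proof.
move=> Hxy Hxz Hyz.
have [[Hp Hfd] HCF] := (Hpf, HRC.2).
case: Hfech => g0 [dg0 [g0sp gE]].
have g0sym v : g0 (- v) = g0 v.
  case: (leP 0 v) => v0; first by rewrite (g0sp v v0).1.
  by rewrite -[in RHS](opprK v) (g0sp (- v) _).1 // oppr_ge0 ltW.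
have g0pos v : 0 < g0 v.
  case: (leP 0 v) => v0; first by rewrite (g0sp v v0).2.
  by rewrite -(opprK v) g0sym (g0sp (- v) _).2 // oppr_ge0 ltW.
set H := cdfR g0.
have HN s : H (- s) = 1 - H s by apply: cdfN.
have Hlt a b : a < b -> H a < H b by apply: cdf_lt.
have Hinj a b : H a = H b -> a = b.
  by move=> E; case: (ltgtP a b) => // /Hlt; rewrite E ltxx.
have Hmono a b : H a < H b -> a < b.
  move=> E; case: (ltgtP a b) => // [ba|ab].
  - by have := Hlt _ _ ba; lra.
  - by move: E; rewrite ab ltxx.
have H0 : H 0 = 1 / 2.
  by have := HN 0; rewrite oppr0 => E; lra.
have Hge0 s : 0 <= H s.
  by rewrite /H /cdfR fine_ge0 // integral_ge0 // => w _; rewrite lee_fin ltW.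
have Hlt1 s : H s < 1.
  have := Hlt (- s - 1) (- s) ltac:(lra); have := Hge0 (- s - 1); rewrite HN; lra.
have cdfg a b s : a != b -> cdfR (g a b) s = H (s - (u a - u b)).
  move=> ab; rewrite /H /cdfR.
  have -> : g a b = fun v => g0 (v - (u a - u b)) by apply/funext => v; rewrite gE.
  rewrite int_shift //; first by case: dg0.
  by move=> v; apply: ltW.
have rat0 a b : D a b -> H (u b - u a) = p b a.
  move=> Dab; have := (Hrt _ _ Dab).1; rewrite cdfg ?HDC // => <-; congr H; lra.
have key a b t : D a b -> 0 < t -> cdfRp (f a b) t * p a b = 1 - H (rinv r t - (u a - u b)).
  move=> Dab t0; have := (Hrt _ _ Dab).2 t t0; rewrite (Hrt _ _ Dab).1 cdfg ?HDC // => <-.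
  have [pab0 pabs] := Hp a b Dab.
  have -> : 1 - p b a = p a b by lra.
  by rewrite divfK // gt_eqF.
have rpos v : 0 < v -> 0 < r v.
  move=> v0; rewrite lt_neqAle HCF.1 // andbT; apply/negP => /eqP rv0.
  have [pyz0 _] := Hp y z Hyz.
  set c := u y - u z.
  have e0 : 0 < (1 - H (v - c)) / p y z by rewrite divr_gt0 // subr_gt0.
  have [t [t0 Ft]] := @cdfRp_small R (f y z) (Hfd y z Hyz) _ e0.
  have := key y z t Hyz t0; rewrite -/c => E.
  have : H (v - c) < H (rinv r t - c).
    by move: Ft; rewrite ltr_pdivlMr // E; lra.
  move/Hmono => vlt.
  have rt : v < rinv r t by lra.
  case: (rinv_cases r t) => [E0|[rt0 [rrt0 _]]]; first by move: rt; rewrite E0; lra.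
  by have := @r_bound R r HCF v v0 (esym rv0) _ rt0 rrt0; lra.
have thspec a b : D a b -> 1 / 2 < p a b ->
    0 < theta p f a b /\ rinv r (theta p f a b) = u a - u b.
  move=> Dab pab.
  have [pab0 pabs] := Hp a b Dab.
  have c0 : 0 < u a - u b.
    have E := rat0 a b Dab.
    have : H (u b - u a) < H 0 by rewrite E H0; lra.
    by move/Hmono; lra.
  have ex : exists t, 0 < t /\ cdfRp (f a b) t = 1 / (2 * p a b).
    exists (r (u a - u b)); split; first exact: rpos.
    have := key a b _ Dab (rpos _ c0); rewrite rinv_eq // ?rpos // subrr H0 => E.
    apply: (mulIf (x := p a b)); first by rewrite gt_eqF.
    by rewrite E; field; rewrite gt_eqF.
  have [th0 thF] := xgetPex 0 ex.
  rewrite /theta; split => //.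
  have := key a b _ Dab th0; rewrite thF.
  have -> : 1 / (2 * p a b) * p a b = 1 / 2 by field; rewrite gt_eqF.
  move=> E; have : H (rinv r (xget 0 [set t | 0 < t /\ cdfRp (f a b) t = 1 / (2 * p a b)]) - (u a - u b)) = H 0.
    by rewrite H0; lra.
  by move/Hinj; lra.
have Hyx : y != x by rewrite eq_sym.
rewrite cdfg // sub0r opprB.
have [pxz0 pxzs] := Hp x z Hxz.
have [pyz0 pyzs] := Hp y z Hyz.
rewrite /pbarF; case: ifP => [pyz|npyz].
  have [th0 thE] := thspec y z Hyz pyz.
  have := key x z _ Hxz th0; rewrite thE mulrC => ->.
  rewrite -HN; congr H; lra.
case: ifP => [/eqP pyz|pyz2].
  have E := rat0 y z Hyz.
  have : H (u z - u y) = H 0 by rewrite E H0; lra.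
  move/Hinj => E2.
  have -> : u x - u y = - (u z - u x) by lra.
  rewrite HN rat0 //; lra.
have pyzlt : p y z < 1 / 2.
  by move: npyz pyz2; case: ltgtP.
have pzy : 1 / 2 < p z y by lra.
have Dzy := HDsym _ _ Hyz.
have Dzx := HDsym _ _ Hxz.
have [th0 thE] := thspec z y Dzy pzy.
have := key z x _ Dzx th0; rewrite thE mulrC => ->.
have -> : u z - u y - (u z - u x) = u x - u y by lra.
lra.
Qed.
End Main.

Local Open Scope ring_scope.

Theorem theorem3 (R : realType) (X : finType) (D : rel X)
  (p : X -> X -> R) (f : X -> X -> R -> R)
  (HDC : forall x y, D x y -> x != y)
  (HDsym : forall x y, D x y -> D y x)
  (HDne : exists x y, D x y)
  (Hpf : is_SCF_RT D p f)
  (Hrat : exists (u : X -> R) (g : X -> X -> R -> R) (r : R -> R),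
            is_RUM_CF u g r /\ fechnerian u g /\ rationalizes D p f u g r)
  (x y z : X) (Hxy : x != y) (HxyD : ~~ D x y)
  (Hxz : D x z) (Hyz : D y z) :
  exists pbar : R,
    (forall (u : X -> R) (g : X -> X -> R -> R) (r : R -> R),
        is_RUM_CF u g r -> fechnerian u g -> rationalizes D p f u g r ->
        cdfR (g y x) 0 = pbar) /\
    (p y z <= p x z ->
       (1 / 2 < p y z -> pbar = p x z * cdfRp (f x z) (theta p f y z)) /\
       (p y z = 1 / 2 -> pbar = p x z) /\
       (p y z < 1 / 2 -> pbar = 1 - p z x * cdfRp (f z x) (theta p f z y))).
Proof.
exists (pbarF p f x y z); split.
- move=> u g r HRC Hfech Hrt.
  exact: (@core R X D p f HDC HDsym Hpf u g r HRC Hfech Hrt x y z Hxy Hxz Hyz).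
- move=> _; rewrite /pbarF; split; [|split].
  + by move=> h; rewrite h.
  + by move=> h; rewrite h ltxx eqxx.
  + by move=> h; rewrite ltNge (ltW h) /= (lt_eqF h).
Qed.
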